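(* Let $\Omega$ be a finite $w$-regular graph. Let $A$ and $B$ be induced subgraphs of $\Omega$ with disjoint vertex sets such that $V(A)\cup V(B)=V(\Omega)$ and $|V(A)|\ge|V(B)|$. If $B$ contains an edge, then $A$ contains an edge. *)

(* Defs.v *)
From mathcomp Require Import all_boot.
Set Implicit Arguments. Unset Strict Implicit. Unset Printing Implicit Defensive.

Definition simple_graph (T : finType) (e : rel T) : Prop :=
  symmetric e /\ irreflexive e.

Definition nbhd (T : finType) (e : rel T) (x : T) : {set T} := [set y | e x y].

Definition regular (T : finType) (e : rel T) (w : nat) : Prop :=
  forall x : T, #|nbhd e x| = w.

Definition induced_has_edge (T : finType) (e : rel T) (S : {set T}) : Prop :=
  exists x y, [/\ x \in S, y \in S & e x y].

(* Main.v *)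
Require Import Defs.
From mathcomp Require Import all_boot.
From Stdlib Require Classical_Prop.

Lemma cnt_lem (T : finType) (e : rel T) (a : T) (B : {set T}) :
  \sum_(b in B) nat_of_bool (e a b) = #|nbhd e a :&: B|.
Proof.
rewrite -sum1_card big_mkcond [RHS]big_mkcond /=.
apply: eq_bigr => b _; rewrite !inE.
by case: (b \in B); case: (e a b).
Qed.

Theorem lemma4p7 (T : finType) (e : rel T) (w : nat)
  (He : simple_graph e) (Hreg : regular e w) (A B : {set T})
  (Hdisj : [disjoint A & B]) (Hcov : A :|: B = [set: T])
  (Hcard : #|B| <= #|A|) :
  induced_has_edge e B -> induced_has_edge e A.
Proof.
case: He => Hsym Hirr.
move=> [b0 [b1 [Hb0 Hb1 Hb01]]].
apply/(Classical_Prop.NNPP _) => HnA.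
have HA : forall a, a \in A -> #|nbhd e a :&: B| = w.
  move=> a Ha; rewrite -(Hreg a); apply: eq_card => y.
  rewrite !inE; case Hy: (e a y) => //=.
  have : y \in A :|: B by rewrite Hcov inE.
  rewrite inE; case/orP => // HyA.
  by exfalso; apply: HnA; exists a, y.
have HBle : forall b, #|nbhd e b :&: A| <= w.
  by move=> b; rewrite -(Hreg b); apply: subset_leq_card; apply: subsetIl.
have Hb0lt : #|nbhd e b0 :&: A| < w.
  rewrite -(Hreg b0); apply: proper_card; apply/properP; split.
    exact: subsetIl.
  exists b1; first by rewrite inE.
  rewrite inE negb_and; apply/orP; right.
  by apply/negP => Hb1A; move: Hdisj; rewrite disjoint_subset => /subsetP /(_ b1 Hb1A); rewrite !inE Hb1.
have E1 : \sum_(a in A) \sum_(b in B) nat_of_bool (e a b) = #|A| * w.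
  rewrite -sum_nat_const; apply: eq_bigr => a Ha; by rewrite cnt_lem HA.
rewrite exchange_big /= in E1.
have E2 : \sum_(b in B) \sum_(a in A) nat_of_bool (e a b)
        = \sum_(b in B) #|nbhd e b :&: A|.
  apply: eq_bigr => b _; rewrite -cnt_lem; apply: eq_bigr => a _.
  by rewrite Hsym.
rewrite E2 (bigD1 b0 Hb0) /= in E1.
have : \sum_(b in B | b != b0) #|nbhd e b :&: A| <= \sum_(b in B | b != b0) w.
  by apply: leq_sum => b _.
rewrite sum_nat_const => Hle.
have Hc : #|B| = #|[pred b in B | b != b0]|.+1.
  rewrite (cardD1 b0) Hb0 /=; congr _.+1; apply: eq_card => x; rewrite !inE.
  by rewrite andbC.
have : #|A| * w < #|B| * w.
  rewrite -E1 Hc mulSn; apply: leq_trans (leq_add Hb0lt Hle).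
  by rewrite addSn.
by rewrite ltnNge leq_mul2r Hcard orbT.
Qed.
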